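(* For every integer $k\ge 2$, the $k$-equal-representation shortlisting rule is non-wasteful. For every integer $k\ge 1$, the $k$-equal-representation shortlisting rule is representatively efficient.
   Context: Let $\mathbb{P}=\{p_1,\dots,p_m\}$ be a finite set of projects, $c:\mathbb{P}\to\mathbb{N}$ a cost function with $c(P)=\sum_{p\in P}c(p)$, and $B\in\mathbb{N}$ a budget limit with $c(p)\le B$ for all $p$. A shortlisting instance is $I=\langle\mathbb{P},c,B\rangle$. The agents are $\mathcal{N}=\{1,\dots,n\}$; a shortlisting profile is $\boldsymbol{P}=(P_1,\dots,P_n)$ with $P_i\subseteq\mathbb{P}$, and $\bigcup\boldsymbol{P}=P_1\cup\dots\cup P_n$. A shortlisting rule $R$ maps each $(I,\boldsymbol{P})$ to $R(I,\boldsymbol{P})\subseteq\bigcup\boldsymbol{P}$. Tie-breaking: for a nonempty family $\mathfrak{P}$ of subsets of $\mathbb{P}$, $T(\mathfrak{P})$ is the unique $P\in\mathfrak{P}$ such that for every $P'\in\mathfrak{P}\setminus\{P\}$ the lowest-index project of $(P\setminus P')\cup(P'\setminus P)$ belongs to $P$. The $k$-equal-representation shortlisting rule returns $$R(I,\boldsymbol{P})=T\Big(\operatorname*{argmax}_{P\subseteq\bigcup\boldsymbol{P},\ c(P)\le kB}\ \sum_{i\in\mathcal{N}}\sum_{\ell=0}^{|P_i\cap P|}\frac{1}{n^{\ell}}\Big).$$ $R$ is non-wasteful if for every $I$ and $\boldsymbol{P}$, either $c(R(I,\boldsymbol{P}))\ge B$ or $R(I,\boldsymbol{P})=\bigcup\boldsymbol{P}$.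 A set $\mathcal{P}\subseteq\mathbb{P}$ is representatively dominated (for $I,\boldsymbol{P}$) if there is $\mathcal{P}'\subseteq\mathbb{P}$ with $c(\mathcal{P}')\le c(\mathcal{P})$ and $|\mathcal{P}'\cap P_i|\ge|\mathcal{P}\cap P_i|$ for all $i$, strictly for at least one $i$; $R$ is representatively efficient if its output is never representatively dominated. *)

(* Defs.v *)
From HB Require Import structures.
From mathcomp Require Import all_boot all_order all_algebra.
Set Implicit Arguments. Unset Strict Implicit. Unset Printing Implicit Defensive.
Import Order.TTheory GRing.Theory Num.Theory.

(* Projects are 'I_m = {p_1,...,p_m} (index order = project index order). *)

Definition cost (m : nat) (c : 'I_m -> nat) (P : {set 'I_m}) : nat :=
  \sum_(p in P) c p.

Definition profile_union (m n : nat) (prof : 'I_n -> {set 'I_m}) : {set 'I_m} :=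
  \bigcup_(i < n) prof i.

Definition shortlisting_rule : Type :=
  forall (m : nat) (c : 'I_m -> nat) (B : nat) (n : nat),
    ('I_n -> {set 'I_m}) -> {set 'I_m}.

(* "the lowest-index project of (P \ P') u (P' \ P) belongs to P"
   (for P <> P'): the first index where P and P' differ is in P. *)
Definition lowest_diff_in (m : nat) (P P' : {set 'I_m}) : bool :=
  [exists j : 'I_m, [&& j \in P, j \notin P' &
     [forall i : 'I_m, (i < j)%N ==> ((i \in P) == (i \in P'))]]].

Definition tie_break (m : nat) (F : {set {set 'I_m}}) : {set 'I_m} :=
  odflt set0 [pick P in F |
    [forall P' in F, (P' != P) ==> lowest_diff_in P P']].

Definition er_score (m n : nat) (prof : 'I_n -> {set 'I_m}) (P : {set 'I_m})
  : rat :=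
  (\sum_(i < n) \sum_(l < #|prof i :&: P|.+1) ((n%:R)^-1) ^+ l)%R.

Definition er_feasible (k m : nat) (c : 'I_m -> nat) (B n : nat)
  (prof : 'I_n -> {set 'I_m}) : {set {set 'I_m}} :=
  [set P : {set 'I_m} | (P \subset profile_union prof) && (cost c P <= k * B)].

Definition er_argmax (k m : nat) (c : 'I_m -> nat) (B n : nat)
  (prof : 'I_n -> {set 'I_m}) : {set {set 'I_m}} :=
  [set P in er_feasible k c B prof |
    [forall Q in er_feasible k c B prof, (er_score prof Q <= er_score prof P)%R]].

Definition k_equal_representation (k : nat) : shortlisting_rule :=
  fun m c B n prof => tie_break (er_argmax k c B prof).

Definition non_wasteful (R : shortlisting_rule) : Prop :=
  forall (m : nat) (c : 'I_m -> nat) (B : nat),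
    (forall p, c p <= B) ->
    forall (n : nat) (prof : 'I_n -> {set 'I_m}),
      B <= cost c (R m c B n prof) \/ R m c B n prof = profile_union prof.

Definition representatively_dominated (m : nat) (c : 'I_m -> nat) (n : nat)
  (prof : 'I_n -> {set 'I_m}) (P : {set 'I_m}) : Prop :=
  exists P' : {set 'I_m},
    cost c P' <= cost c P /\
    (forall i : 'I_n, #|P :&: prof i| <= #|P' :&: prof i|) /\
    (exists i : 'I_n, #|P :&: prof i| < #|P' :&: prof i|).

Definition representatively_efficient (R : shortlisting_rule) : Prop :=
  forall (m : nat) (c : 'I_m -> nat) (B : nat),
    (forall p, c p <= B) ->
    forall (n : nat) (prof : 'I_n -> {set 'I_m}),
      ~ representatively_dominated c prof (R m c B n prof).

(* Main.v *)
Require Import Defs.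
From mathcomp Require Import all_boot all_order all_algebra.
Import Order.TTheory GRing.Theory Num.Theory.

Lemma seq_max (T : eqType) (f : T -> rat) (x0 : T) (s : seq T) :
  exists2 x, x \in x0 :: s & forall y, y \in x0 :: s -> (f y <= f x)%R.
Proof.
elim: s x0 => [|a s IH] x0.
  by exists x0 => [|y]; rewrite ?inE // => /eqP ->.
have [x xin xm] := IH a.
case: (lerP (f x0) (f x)) => h.
  exists x; first by rewrite inE xin orbT.
  by move=> y; rewrite inE => /orP [/eqP -> //|]; apply: xm.
exists x0; first by rewrite inE eqxx.
move=> y; rewrite inE => /orP [/eqP -> //|/xm hy].
exact: le_trans hy (ltW h).
Qed.

Lemma argmax_nonempty k m (c : 'I_m -> nat) B n (prof : 'I_n -> {set 'I_m}) :
  er_argmax k c B prof != set0.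
Proof.
have f0 : set0 \in er_feasible k c B prof.
  by rewrite inE sub0set /cost big_set0.
have [x xin xm] := @seq_max _ (er_score prof) set0 (enum (er_feasible k c B prof)).
apply/set0Pn; exists x.
have xF : x \in er_feasible k c B prof.
  by move: xin; rewrite inE mem_enum => /orP [/eqP ->|].
rewrite inE xF /=; apply/forall_inP => Q QF; apply: xm.
by rewrite inE mem_enum QF orbT.
Qed.

Lemma lex_exists m (F : {set {set 'I_m}}) : F != set0 ->
  forall j, j <= m -> exists G : {set {set 'I_m}},
   [/\ G \subset F, G != set0,
       (forall P Q (i : 'I_m), P \in G -> Q \in G -> (i < j)%N -> (i \in P) = (i \in Q)) &
       (forall P P', P \in G -> P' \in F -> P' \notin G -> lowest_diff_in P P')].
Proof.
move=> F0; elim=> [|j IH] hj.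
  by exists F; split=> // P P' _ -> .
have [G [GF G0 Gag Glex]] := IH (ltnW hj).
pose jo : 'I_m := Ordinal hj.
case: (boolP [exists P in G, jo \in P]) => hex.
- exists [set P in G | jo \in P]; split.
  + by apply: subset_trans GF; apply/subsetP => P; rewrite inE => /andP [].
  + case/exists_inP: hex => P PG Pj; apply/set0Pn; exists P; by rewrite inE PG.
  + move=> P Q i; rewrite !inE => /andP [PG Pj] /andP [QG Qj].
    rewrite ltnS leq_eqVlt => /orP [/eqP ieq|ilt]; last exact: Gag.
    have -> : i = jo by apply: val_inj.
    by rewrite Pj Qj.
  + move=> P P'; rewrite !inE => /andP [PG Pj] P'F.
    case: (boolP (P' \in G)) => P'G /=; last by move=> _; apply: Glex.
    move=> P'j; apply/existsP; exists jo; rewrite Pj P'j /=.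
    by apply/forallP => i; apply/implyP => ilt; rewrite (Gag P P').
- exists G; split=> //.
  + move=> P Q i PG QG; rewrite ltnS leq_eqVlt => /orP [/eqP ieq|ilt]; last exact: Gag.
    have -> : i = jo by apply: val_inj.
    move/exists_inP: hex => hex.
    case Pj: (jo \in P); first by exfalso; apply: hex; exists P.
    case Qj: (jo \in Q) => //; by exfalso; apply: hex; exists Q.
Qed.

Lemma tie_break_in m (F : {set {set 'I_m}}) : F != set0 -> tie_break F \in F.
Proof.
move=> F0; rewrite /tie_break; case: pickP => [P /andP [] //|none].
have [G [GF G0 Gag Glex]] := @lex_exists m F F0 m (leqnn m).
case/set0Pn: G0 => P PG.
move: (none P); rewrite (subsetP GF _ PG) /=.
move/negbT/negP; case; apply/forall_inP => P' P'F; apply/implyP => ne.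
case: (boolP (P' \in G)) => P'G; last exact: Glex.
by exfalso; move/eqP: ne; apply; apply/setP => i; rewrite (Gag P' P i).
Qed.

Local Open Scope ring_scope.

Definition gsum (x : rat) (a : nat) : rat := \sum_(l < a.+1) x ^+ l.

Lemma gsum_lt (x : rat) a b : 0 < x -> (a < b)%N -> gsum x a < gsum x b.
Proof.
move=> x0; elim: b => [//|b IH]; rewrite ltnS leq_eqVlt => /orP [/eqP ->|ab].
  by rewrite /gsum [in X in _ < X]big_ord_recr /= ltrDl exprn_gt0.
apply: lt_trans (IH ab) _.
by rewrite /gsum [in X in _ < X]big_ord_recr /= ltrDl exprn_gt0.
Qed.

Lemma gsum_le (x : rat) a b : 0 < x -> (a <= b)%N -> gsum x a <= gsum x b.
Proof.
move=> x0; rewrite leq_eqVlt => /orP [/eqP ->//|ab]; exact/ltW/(gsum_lt _ _ _ x0).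
Qed.

Lemma score_lt m n (prof : 'I_n -> {set 'I_m}) (P Q : {set 'I_m}) :
  (forall i, (#|P :&: prof i| <= #|Q :&: prof i|)%N) ->
  (exists i, (#|P :&: prof i| < #|Q :&: prof i|)%N) ->
  er_score prof P < er_score prof Q.
Proof.
move=> hle [i0 hlt].
have n0 : (0 < n)%N := leq_ltn_trans (leq0n _) (ltn_ord i0).
have x0 : 0 < (n%:R : rat)^-1 by rewrite invr_gt0 ltr0n.
rewrite /er_score (bigD1 i0) //= [X in _ < X](bigD1 i0) //=.
apply: ltr_leD.
  by move: (gsum_lt _ _ _ x0 hlt); rewrite /gsum setIC [prof i0 :&: Q]setIC.
apply: ler_sum => i _.
by move: (gsum_le _ _ _ x0 (hle i)); rewrite /gsum setIC [prof i :&: Q]setIC.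
Qed.

Local Close Scope ring_scope.

Lemma R_argmax k m (c : 'I_m -> nat) B n (prof : 'I_n -> {set 'I_m}) :
  k_equal_representation k c B prof \in er_argmax k c B prof.
Proof. exact/tie_break_in/argmax_nonempty. Qed.

Lemma cost_sub m (c : 'I_m -> nat) (P Q : {set 'I_m}) :
  P \subset Q -> (cost c P <= cost c Q)%N.
Proof.
move=> PQ; rewrite /cost [X in (_ <= X)%N](big_setID P) /= (setIidPr PQ).
exact: leq_addr.
Qed.

Theorem proposition2 :
  (forall k : nat, 2 <= k -> non_wasteful (k_equal_representation k)) /\
  (forall k : nat, 1 <= k -> representatively_efficient (k_equal_representation k)).
Proof.
split.
- move=> k k2 m c B cB n prof.
  have := R_argmax k m c B n prof.
  set R := k_equal_representation k c B prof.
  rewrite inE => /andP [RF /forall_inP Rmax].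
  move: RF; rewrite inE => /andP [Rsub Rcost].
  case: (leqP B (cost c R)) => hB; [by left|right].
  apply/eqP; rewrite eqEsubset Rsub /=; apply/subsetP => p pU.
  apply/negPn/negP => pR.
  have Qf : p |: R \in er_feasible k c B prof.
    rewrite inE subUset sub1set pU Rsub /= /cost big_setU1 //=.
    apply: leq_trans (_ : B + B <= k * B)%N.
      by apply: leq_add; [exact: cB|exact: ltnW].
    by rewrite addnn -mul2n leq_mul2r k2 orbT.
  have := Rmax _ Qf; apply/negP; rewrite -ltNge.
  move: pU; rewrite /profile_union => /bigcupP [i _ pi].
  apply: score_lt.
    by move=> j; apply: subset_leq_card; apply: setSI; apply: subsetUr.
  exists i; apply: proper_card; rewrite properEneq; apply/andP; split.
    apply/eqP => /setP /(_ p); by rewrite !inE eqxx pi (negbTE pR).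
  by apply: setSI; apply: subsetUr.
- move=> k k1 m c B cB n prof [P' [hc [hle hlt]]].
  have := R_argmax k m c B n prof.
  set R := k_equal_representation k c B prof.
  rewrite inE => /andP [RF /forall_inP Rmax].
  move: RF; rewrite inE => /andP [Rsub Rcost].
  have Qf : P' :&: profile_union prof \in er_feasible k c B prof.
    rewrite inE subsetIr /=.
    apply: leq_trans Rcost; apply: leq_trans hc; apply: cost_sub; exact: subsetIl.
  have := Rmax _ Qf; apply/negP; rewrite -ltNge.
  have e : forall i, (P' :&: profile_union prof) :&: prof i = P' :&: prof i.
    move=> i; rewrite -setIA; congr (_ :&: _); apply/setIidPr.
    by apply: (bigcup_max i).
  apply: score_lt.
    by move=> i; rewrite e.
  by case: hlt => i hi; exists i; rewrite e.
Qed.
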